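(* Let $\mathbb{B}$ be a finite-dimensional $\mathbb{F}$-subalgebra of $\mathbb{M}_n(K)$ with Jacobson radical $\mathbb{R}$, and suppose $\mathbb{B}=\mathbb{B}'\oplus\mathbb{R}$ for an $\mathbb{F}$-subalgebra $\mathbb{B}'$. Then $\dim_{\mathbb{F}}\mathbb{B}'=\dim_K(K\mathbb{B}')$, and the sum $K\mathbb{B}'+K\mathbb{R}$ is direct.
   Context: $\mathbb{F}$ is a finite field and $K$ is the function field of a smooth projective irreducible curve over $\mathbb{F}$, with $\mathbb{F}$ the full field of constants of $K$ (algebraically closed in $K$). For a subset $S\subseteq\mathbb{M}_n(K)$, $KS$ denotes its $K$-linear span. *)

(* Defs.v *)
From HB Require Import structures.
From mathcomp Require Import all_boot all_order all_algebra all_field.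
Set Implicit Arguments. Unset Strict Implicit. Unset Printing Implicit Defensive.
Import GRing.Theory.
Local Open Scope ring_scope.

Section Defs.
Variables (F : finFieldType) (K : fieldType) (f : {rmorphism F -> K}).

Definition transcendental_over (t : K) :=
  forall p : {poly F}, p != 0 -> (map_poly f p).[t] != 0.

Definition algebraic_over (x : K) :=
  exists2 p : {poly F}, p != 0 & (map_poly f p).[x] = 0.

(* K is a function field in one variable over F: there is t transcendental
   over F such that K is a finite-dimensional F(t)-vector space (spanned by
   finitely many e_i over F(t)). *)
Definition function_field_one_var :=
  exists t : K, transcendental_over t /\
    exists (m : nat) (e : 'I_m -> K), forall x : K,
      exists (p q : 'I_m -> {poly F}), (forall i, q i != 0) /\
        x = \sum_(i < m) ((map_poly f (p i)).[t] / (map_poly f (q i)).[t]) * e i.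

Definition full_constant_field :=
  forall x : K, algebraic_over x -> exists c : F, x = f c.

Variable n : nat.
Definition mset := 'M[K]_n -> Prop.

Definition F_span (s : seq 'M[K]_n) : mset := fun A =>
  exists c : 'I_(size s) -> F, A = \sum_(i < size s) f (c i) *: s`_i.

Definition F_free (s : seq 'M[K]_n) :=
  forall c : 'I_(size s) -> F,
    \sum_(i < size s) f (c i) *: s`_i = 0 -> forall i, c i = 0.

Definition F_dim_is (S : mset) (d : nat) :=
  exists s : seq 'M[K]_n, [/\ size s = d, F_free s & forall A, S A <-> F_span s A].

Definition K_span (S : mset) : mset := fun A =>
  exists (m : nat) (c : 'I_m -> K) (v : 'I_m -> 'M[K]_n),
    (forall i, S (v i)) /\ A = \sum_(i < m) c i *: v i.

Definition K_free (s : seq 'M[K]_n) :=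
  forall c : 'I_(size s) -> K,
    \sum_(i < size s) c i *: s`_i = 0 -> forall i, c i = 0.

Definition K_spanned (s : seq 'M[K]_n) : mset := fun A =>
  exists c : 'I_(size s) -> K, A = \sum_(i < size s) c i *: s`_i.

Definition K_dim_is (S : mset) (d : nat) :=
  exists s : seq 'M[K]_n, [/\ size s = d, K_free s & forall A, S A <-> K_spanned s A].

Definition F_subspace (S : mset) :=
  [/\ S 0, (forall A B, S A -> S B -> S (A + B)) & (forall c A, S A -> S (f c *: A))].

(* F-subalgebra of M_n(K) (not required to contain the identity) *)
Definition F_subalgebra (S : mset) :=
  F_subspace S /\ (forall A B, S A -> S B -> S (A *m B)).

Definition two_sided_ideal (B I : mset) :=
  [/\ F_subspace I, (forall A, I A -> B A),
      (forall A X, B A -> I X -> I (A *m X)) & (forall A X, B A -> I X -> I (X *m A))].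

Definition nilpotent_set (I : mset) :=
  exists k : nat, forall v : 'I_k.+1 -> 'M[K]_n, (forall i, I (v i)) ->
    foldr (fun A P => A *m P) 1%:M [seq v i | i <- enum 'I_k.+1] = 0.

(* Jacobson radical of a finite-dimensional algebra B: its largest nilpotent
   two-sided ideal. *)
Definition jacobson_radical (B R : mset) :=
  [/\ two_sided_ideal B R, nilpotent_set R &
      forall I, two_sided_ideal B I -> nilpotent_set I -> forall A, I A -> R A].

End Defs.

(* Main.v *)
From HB Require Import structures.
From mathcomp Require Import all_boot all_order all_algebra all_field all_fingroup all_solvable.
From mathcomp Require Import zify.
From Stdlib Require Import Classical ClassicalEpsilon.
Require Import Defs.
Set Implicit Arguments. Unset Strict Implicit. Unset Printing Implicit Defensive.
Import GRing.Theory.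
Local Open Scope ring_scope.


Section GenAlg.
Variables (K : fieldType) (V : lmodType K) (mul : V -> V -> V).
Hypotheses (mulA : associative mul)
  (mulDl : left_distributive mul +%R) (mulDr : right_distributive mul +%R)
  (mulZl : forall a x y, mul (a *: x) y = a *: mul x y)
  (mulZr : forall a x y, mul x (a *: y) = a *: mul x y).

Lemma gmul0r x : mul 0 x = 0.
Proof. by have := mulZl 0 0 x; rewrite !scale0r. Qed.
Lemma gmulr0 x : mul x 0 = 0.
Proof. by have := mulZr 0 x 0; rewrite !scale0r. Qed.

Lemma gmul_suml (I : Type) (r : seq I) (P : pred I) (G : I -> V) y :
  mul (\sum_(i <- r | P i) G i) y = \sum_(i <- r | P i) mul (G i) y.
Proof. by elim/big_rec2: _ => [|i a b _ <-]; rewrite ?gmul0r ?mulDl. Qed.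
Lemma gmul_sumr (I : Type) (r : seq I) (P : pred I) (G : I -> V) y :
  mul y (\sum_(i <- r | P i) G i) = \sum_(i <- r | P i) mul y (G i).
Proof. by elim/big_rec2: _ => [|i a b _ <-]; rewrite ?gmulr0 ?mulDr. Qed.

Lemma foldr_mulA y w l : foldr mul (mul y w) l = mul (foldr mul y l) w.
Proof. by elim: l => //= x l ->; rewrite mulA. Qed.

Definition nilp (S : V -> Prop) k := forall z l, size l = k -> S z ->
  (forall x, x \in l -> S x) -> foldr mul z l = 0.

Definition sumset (I J : V -> Prop) x := exists a b, [/\ I a, J b & x = a + b].

Section Sum.
Variables (S I J : V -> Prop).
Hypotheses (Smul : forall x y, S x -> S y -> S (mul x y)) (IS : forall x, I x -> S x)
  (JS : forall x, J x -> S x) (JD : forall x y, J x -> J y -> J (x + y))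
  (Jl : forall s x, S s -> J x -> J (mul s x)) (Jr : forall s x, S s -> J x -> J (mul x s)).

Lemma foldr_S z l : S z -> (forall x, x \in l -> S x) -> S (foldr mul z l).
Proof.
move=> Sz; elim: l => //= x l IH Sl; apply: Smul; first by apply: Sl; rewrite inE eqxx.
by apply: IH => y yl; apply: Sl; rewrite inE yl orbT.
Qed.

Lemma expand z l : sumset I J z -> (forall x, x \in l -> sumset I J x) ->
  exists zI lI r, [/\ I zI, (forall x, x \in lI -> I x), size lI = size l, J r &
     foldr mul z l = foldr mul zI lI + r].
Proof.
move=> [a [b [Ia Jb ->]]]; elim: l => [|x l IH] Hl /=.
  by exists a, [::], b; split => // x; rewrite in_nil.
have [zI [lI [r [IzI IlI slI Jr' ->]]]] : exists zI lI r, [/\ I zI, (forall x, x \in lI -> I x), size lI = size l, J r &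
     foldr mul (a + b) l = foldr mul zI lI + r].
  by apply: IH => y yl; apply: Hl; rewrite inE yl orbT.
have [c [d [Ic Jd ->]]] : sumset I J x by apply: Hl; rewrite inE eqxx.
exists zI, (c :: lI), (mul c r + mul d (foldr mul zI lI) + mul d r); split => //=.
- by move=> y; rewrite inE => /orP[/eqP->|]; [|exact: IlI].
- by rewrite slI.
- apply: JD; [apply: JD|]; [apply: Jl (IS Ic) Jr' | apply: Jr => //; apply: foldr_S; [exact: IS|move=> y /IlI; exact: IS]|].
  by apply: Jl => //; exact: JS.
by rewrite mulDl !mulDr !addrA.
Qed.

Lemma nilp_sum k1 k2 : nilp I k1 -> nilp J k2 -> nilp (sumset I J) (k1 + k2 * k1.+1)%N.
Proof.
move=> nI nJ.
have blk : forall y l, size l = k1 -> sumset I J y -> (forall x, x \in l -> sumset I J x) ->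
    J (foldr mul y l).
  move=> y l sl Sy Sl; have [zI [lI [r [IzI IlI slI Jr' ->]]]] := expand Sy Sl.
  by rewrite nI ?add0r // slI.
suff H : forall t z l, size l = (k1 + t * k1.+1)%N -> sumset I J z ->
    (forall x, x \in l -> sumset I J x) ->
    exists zj lj, [/\ J zj, (forall x, x \in lj -> J x), size lj = t &
      foldr mul z l = foldr mul zj lj].
  move=> z l sl Sz Sl; have [zj [lj [Jz Jl' slj ->]]] := H k2 z l sl Sz Sl.
  exact: nJ.
elim=> [|t IH] z l sl Sz Sl.
  by exists (foldr mul z l), [::]; split => //; apply: blk => //; rewrite sl mul0n addn0.
have e : l = take k1.+1 l ++ drop k1.+1 l by rewrite cat_take_drop.
have sdrop : size (drop k1.+1 l) = (k1 + t * k1.+1)%N.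
  by rewrite size_drop sl mulSn addnCA addKn.
have stake : size (take k1.+1 l) = k1.+1.
  by rewrite size_takel // sl mulSn; lia.
have [zj [lj [Jz Jlj slj E]]] := IH z (drop k1.+1 l) sdrop Sz
  (fun x xl => Sl x (mem_drop xl)).
rewrite e foldr_cat E.
move: stake (fun x (xl : x \in take k1.+1 l) => Sl x (mem_take xl)).
case/lastP: (take k1.+1 l) => // l1 y; rewrite size_rcons => -[sl1] Sl1.
rewrite foldr_rcons foldr_mulA.
exists zj, (foldr mul y l1 :: lj); split => //=; last by rewrite slj.
move=> x; rewrite inE => /orP[/eqP->|]; last exact: Jlj.
apply: blk => //; first by apply: Sl1; rewrite mem_rcons inE eqxx.
by move=> w wl; apply: Sl1; rewrite mem_rcons inE wl orbT.
Qed.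
End Sum.

Definition spanset (G : V -> Prop) x := exists t (a : 'I_t -> K) (g : 'I_t -> V),
  (forall i, G (g i)) /\ x = \sum_(i < t) a i *: g i.

Lemma foldr_lin_mid z l1 l2 t (a : 'I_t -> K) (g : 'I_t -> V) :
  foldr mul z (l1 ++ (\sum_(i < t) a i *: g i) :: l2) =
  \sum_(i < t) a i *: foldr mul z (l1 ++ g i :: l2).
Proof.
elim: l1 => [|x l1 IH] /=.
  by rewrite gmul_suml; apply: eq_bigr => i _; rewrite mulZl.
by rewrite IH gmul_sumr; apply: eq_bigr => i _; rewrite mulZr.
Qed.

Lemma foldr_lin_end l t (a : 'I_t -> K) (g : 'I_t -> V) :
  foldr mul (\sum_(i < t) a i *: g i) l = \sum_(i < t) a i *: foldr mul (g i) l.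
Proof.
elim: l => [|x l IH] /=; first by [].
by rewrite IH gmul_sumr; apply: eq_bigr => i _; rewrite mulZr.
Qed.

Lemma nilp_span G k : nilp G k -> nilp (spanset G) k.
Proof.
move=> nG.
suff H : forall l2 l1 z, (size l1 + size l2)%N = k -> (forall x, x \in l1 -> G x) ->
   (forall x, x \in l2 -> spanset G x) -> spanset G z -> foldr mul z (l1 ++ l2) = 0.
  by move=> z l sl Sz Sl; exact: (H l [::] z).
elim=> [|x l2 IH] l1 z sl Gl1 Sl2 [t [a [g [Gg ->]]]].
  rewrite cats0 foldr_lin_end big1 // => i _.
  by rewrite nG ?scaler0 // -sl addn0.
have [t' [a' [g' [Gg' ->]]]] := Sl2 x (mem_head _ _).
rewrite foldr_lin_mid big1 // => i _.
rewrite -cat_rcons IH ?scaler0 //.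
- by rewrite size_rcons addSnnS.
- by move=> w; rewrite mem_rcons inE => /orP[/eqP->|]; [exact: Gg'|exact: Gl1].
- by move=> w wl; apply: Sl2; rewrite inE wl orbT.
by exists t, a, g.
Qed.

End GenAlg.


Lemma cardF_pnat (F : finFieldType) (K : fieldType) (f : {rmorphism F -> K}) d :
  [pchar K].-nat (#|F| ^ d)%N.
Proof.
have [p pp pF] := finPcharP F.
have pK : p \in [pchar K] by rewrite (rmorph_pchar f).
rewrite (eq_pnat _ (pcharf_eq pK)) pnatX.
have := fin_ring_pchar_abelem pF.
move=> /abelem_pgroup; rewrite /pgroup cardsT.
by move=> H; apply/orP; left; exact: H.
Qed.

Definition qpow (F : finFieldType) (K : fieldType) (f : {rmorphism F -> K}) (d : nat)
  : K -> K := fun x => x ^+ (#|F| ^ d)%N.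

Lemma qpow_nmod (F : finFieldType) (K : fieldType) (f : {rmorphism F -> K}) d :
  nmod_morphism (qpow f d).
Proof.
split.
  have : (0 < #|F|)%N by apply/card_gt0P; exists 0.
  by rewrite /qpow expr0n expn_eq0 lt0n => /negbTE ->.
by move=> x y; rewrite /qpow exprDn_pchar // (cardF_pnat f).
Qed.
Lemma qpow_mon (F : finFieldType) (K : fieldType) (f : {rmorphism F -> K}) d :
  monoid_morphism (qpow f d).
Proof. by split=> [|x y]; rewrite /qpow ?expr1n ?exprMn. Qed.

HB.instance Definition _ (F : finFieldType) (K : fieldType) (f : {rmorphism F -> K}) (d : nat) :=
  GRing.isNmodMorphism.Build K K (qpow f d) (qpow_nmod f d).
HB.instance Definition _ (F : finFieldType) (K : fieldType) (f : {rmorphism F -> K}) (d : nat) :=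
  GRing.isMonoidMorphism.Build K K (qpow f d) (qpow_mon f d).

Lemma qpow_f (F : finFieldType) (K : fieldType) (f : {rmorphism F -> K}) d (c : F) :
  qpow f d (f c) = f c.
Proof.
rewrite /qpow -rmorphXn; congr (f _).
elim: d => [|d IH]; first by rewrite expr1.
by rewrite expnS mulnC exprM IH expf_card.
Qed.

Lemma qpow_comp (F : finFieldType) (K : fieldType) (f : {rmorphism F -> K}) a b (x : K) :
  qpow f a (qpow f b x) = qpow f (a + b) x.
Proof. by rewrite /qpow -exprM -expnD addnC. Qed.

Section Mulg.
Variables (R : comNzRingType) (m : nat) (h : 'I_m -> 'I_m -> 'rV[R]_m).
Definition mulg (x y : 'rV[R]_m) : 'rV[R]_m := \sum_i \sum_j (x 0 i * y 0 j) *: h i j.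
Lemma mulgDl : left_distributive mulg +%R.
Proof.
move=> x y z; rewrite /mulg -big_split; apply: eq_bigr => i _.
by rewrite -big_split; apply: eq_bigr => j _; rewrite !mxE mulrDl scalerDl.
Qed.
Lemma mulgDr : right_distributive mulg +%R.
Proof.
move=> x y z; rewrite /mulg -big_split; apply: eq_bigr => i _.
by rewrite -big_split; apply: eq_bigr => j _; rewrite !mxE mulrDr scalerDl.
Qed.
Lemma mulgZl a x y : mulg (a *: x) y = a *: mulg x y.
Proof.
rewrite /mulg scaler_sumr; apply: eq_bigr => i _; rewrite scaler_sumr.
by apply: eq_bigr => j _; rewrite !mxE scalerA mulrA.
Qed.
Lemma mulgZr a x y : mulg x (a *: y) = a *: mulg x y.
Proof.
rewrite /mulg scaler_sumr; apply: eq_bigr => i _; rewrite scaler_sumr.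
by apply: eq_bigr => j _; rewrite !mxE scalerA mulrCA.
Qed.
Lemma mulg0l y : mulg 0 y = 0.
Proof. by have := mulgZl 0 0 y; rewrite !scale0r. Qed.
Lemma mulg0r y : mulg y 0 = 0.
Proof. by have := mulgZr 0 y 0; rewrite !scale0r. Qed.
Lemma mulg_suml t (a : 'I_t -> R) (v : 'I_t -> 'rV_m) y :
  mulg (\sum_k a k *: v k) y = \sum_k a k *: mulg (v k) y.
Proof.
elim/big_rec2: _ => [|k u w _ <-]; last by rewrite mulgDl mulgZl.
exact: mulg0l.
Qed.
Lemma mulg_sumr t (a : 'I_t -> R) (v : 'I_t -> 'rV_m) y :
  mulg y (\sum_k a k *: v k) = \sum_k a k *: mulg y (v k).
Proof.
elim/big_rec2: _ => [|k u w _ <-]; last by rewrite mulgDr mulgZr.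
exact: mulg0r.
Qed.
End Mulg.

Lemma map_mulg (R S : comNzRingType) (g : {rmorphism R -> S}) m h (x y : 'rV[R]_m) :
  map_mx g (mulg h x y) = mulg (fun i j => map_mx g (h i j)) (map_mx g x) (map_mx g y).
Proof.
rewrite /mulg map_mx_sum; apply: eq_bigr => i _; rewrite map_mx_sum.
by apply: eq_bigr => j _; rewrite map_mxZ rmorphM !mxE.
Qed.

Lemma mulg_assoc_ext (R : comNzRingType) m h :
  (forall i j k, mulg h (delta_mx 0 i) (mulg h (delta_mx 0 j) (delta_mx 0 k)) =
                 mulg h (mulg h (delta_mx 0 i) (delta_mx 0 j)) (delta_mx 0 k)) ->
  associative (@mulg R m h).
Proof.
move=> H.
have H1 i j z : mulg h (delta_mx 0 i) (mulg h (delta_mx 0 j) z) =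
                 mulg h (mulg h (delta_mx 0 i) (delta_mx 0 j)) z.
  rewrite (row_sum_delta z) !mulg_sumr; apply: eq_bigr => k _; by rewrite H.
have H2 i y z : mulg h (delta_mx 0 i) (mulg h y z) = mulg h (mulg h (delta_mx 0 i) y) z.
  rewrite (row_sum_delta y) mulg_suml mulg_sumr mulg_sumr mulg_suml.
  by apply: eq_bigr => j _; rewrite H1.
move=> x y z.
rewrite (row_sum_delta x) mulg_suml mulg_suml mulg_suml.
by apply: eq_bigr => i _; rewrite H2.
Qed.


Lemma nz_entry (K : fieldType) m (x : 'rV[K]_m) : x != 0 -> exists i, x 0 i != 0.
Proof.
move=> x0; apply/existsP; apply: contraNT x0 => /existsPn H.
by apply/eqP/rowP => j; rewrite mxE; exact/eqP/negbNE/H.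
Qed.

Lemma nz_row (K : fieldType) m n (U : 'M[K]_(m, n)) : U != 0 -> exists i, row i U != 0.
Proof.
move=> x0; apply/existsP; apply: contraNT x0 => /existsPn H.
by apply/eqP/row_matrixP => j; rewrite row0; exact/eqP/negbNE/H.
Qed.

Lemma sub_submx (K : fieldType) m1 m2 n (A B : 'M[K]_(m1, n)) (C : 'M[K]_(m2, n)) :
  (A <= C)%MS -> (B <= C)%MS -> (A - B <= C)%MS.
Proof. by move=> AC BC; rewrite addmx_sub // -scaleN1r scalemx_sub. Qed.

Section Core.
Variables (F : finFieldType) (K : fieldType) (f : {rmorphism F -> K}).
Hypothesis hconst : full_constant_field f.
Variables (m : nat) (g : 'I_m -> 'I_m -> 'rV[F]_m).
Hypothesis assocF : associative (mulg g).
Local Notation gK := (fun i j => map_mx f (g i j)).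
Local Notation mulK := (mulg gK).
Local Notation e := (fun i : 'I_m => delta_mx 0 i : 'rV[K]_m).
Local Notation sig d := (map_mx (qpow f d)).

Lemma mulKA : associative mulK.
Proof.
apply: mulg_assoc_ext => i j k.
have E l : delta_mx 0 l = map_mx f (delta_mx 0 l) :> 'rV[K]_m by rewrite map_delta_mx.
by rewrite !E -!map_mulg assocF.
Qed.

Lemma sig_mulK d x y : sig d (mulK x y) = mulK (sig d x) (sig d y).
Proof.
rewrite map_mulg /mulg; apply: eq_bigr => i _; apply: eq_bigr => j _.
by congr (_ *: _); apply/matrixP => a b /=; rewrite !mxE qpow_f.
Qed.

Lemma sig_e d i : sig d (e i) = e i.
Proof. by rewrite map_delta_mx. Qed.

Definition idealK (U : 'M[K]_m) := forall x y, (x <= U)%MS ->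
  (mulK y x <= U)%MS /\ (mulK x y <= U)%MS.
Definition nilpK (U : 'M[K]_m) := exists k, nilp mulK (fun x => (x <= U)%MS) k.

Lemma ideal_rows U : (forall i k, (mulK (e i) (row k U) <= U)%MS /\
   (mulK (row k U) (e i) <= U)%MS) -> idealK U.
Proof.
move=> H x y /submxP [u ->]; rewrite mulmx_sum_row (row_sum_delta y); split.
  rewrite mulg_sumr; apply: summx_sub => k _; apply: scalemx_sub.
  rewrite mulg_suml; apply: summx_sub => i _; apply: scalemx_sub; exact: (H i k).1.
rewrite mulg_suml; apply: summx_sub => k _; apply: scalemx_sub.
rewrite mulg_sumr; apply: summx_sub => i _; apply: scalemx_sub; exact: (H i k).2.
Qed.

Lemma descent d (U : 'M[K]_m) : (0 < d)%N -> (sig d U <= U)%MS -> U != 0 ->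
  exists2 c0 : 'rV[F]_m, c0 != 0 & (map_mx f c0 <= U)%MS.
Proof.
move=> d0 sU U0.
have N1 : (1 < #|F| ^ d)%N by rewrite -(exp1n d) ltn_exp2r // finNzRing_gt1.
have fixF z : qpow f d z = z -> exists c, z == f c.
  move=> hz; have [c ->] : exists c, z = f c; last by exists c.
  apply: hconst; exists ('X^(#|F| ^ d) - 'X).
    apply/eqP => /(congr1 (fun p : {poly F} => p`_(#|F| ^ d))).
    rewrite coefB coefXn coefX eqxx coef0.
    have N1' : (#|F| ^ d == 1)%N = false by apply/eqP => h; rewrite h in N1.
    by rewrite N1' subr0 => /eqP; rewrite oner_eq0.
  by rewrite rmorphB /= map_polyXn map_polyX hornerD hornerN hornerXn hornerX; rewrite /qpow in hz; rewrite hz subrr.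
have main : forall k (x : 'rV[K]_m), (x <= U)%MS -> x != 0 ->
    leq #|[pred j | x 0 j != 0]| k -> exists2 c0 : 'rV[F]_m, c0 != 0 & (map_mx f c0 <= U)%MS.
  elim=> [|k IH] x xU x0 sx.
    have [i xi] := nz_entry x0.
    have : leq 1 #|[pred j | x 0 j != 0]| by apply/card_gt0P; exists i.
    by rewrite leqn0 in sx; rewrite (eqP sx).
  have [i xi] := nz_entry x0.
  pose x' := (x 0 i)^-1 *: x.
  have x'i : x' 0 i = 1 by rewrite mxE mulVf.
  have x'U : (x' <= U)%MS by rewrite scalemx_sub.
  pose y := sig d x' - x'.
  have yU : (y <= U)%MS.
    by apply: sub_submx => //; apply: submx_trans _ sU; rewrite map_submx.
  have [y0|yn0] := eqVneq y 0.
    have fx j : exists c, x' 0 j == f c.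
      by apply: fixF; move/rowP/(_ j): y0; rewrite !mxE => /eqP; rewrite subr_eq0 => /eqP.
    pose c0 := \row_j xchoose (fx j).
    have E : map_mx f c0 = x'.
      by apply/rowP => j; rewrite !mxE; apply/esym/eqP; exact: (xchooseP (fx j)).
    exists c0; last by rewrite E.
    apply/eqP => c00; move: x'i; rewrite -E c00 map_mx0 mxE => /eqP.
    by rewrite eq_sym oner_eq0.
  apply: (IH y yU yn0); rewrite -ltnS; apply: leq_trans sx; apply: proper_card.
  apply/properP; split.
    apply/subsetP => j; rewrite !inE; apply: contraNneq => xj.
    by rewrite /y !mxE xj mulr0 rmorph0 subrr.
  have yi : y 0 i = 0 by rewrite /y !mxE mulVf // rmorph1 subrr.
  by exists i; rewrite !inE ?xi ?yi ?eqxx.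
have [r rn0] := nz_row U0.
exact: (main _ (row r U) (row_sub r U) rn0 (leqnn _)).
Qed.


Lemma sig_ideal d U : idealK U -> idealK (sig d U).
Proof.
move=> HU; apply: ideal_rows => i k; rewrite -map_row.
rewrite -(sig_e d i) -!sig_mulK !map_submx.
have := HU _ (e i) (row_sub k U); case=> [h1 h2]; split=> //.
Qed.

Lemma sig_foldr d z l : sig d (foldr mulK z l) = foldr mulK (sig d z) (map (sig d) l).
Proof. by elim: l => //= x l <-; rewrite sig_mulK. Qed.

Lemma sig_nilp d U : nilpK U -> nilpK (sig d U).
Proof.
move=> [k nk]; exists k.
pose G (x : 'rV[K]_m) := exists y, (y <= U)%MS /\ x = sig d y.
have nG : nilp mulK G k.
  move=> z l sl [z' [z'U ->]] Gl.
  have [l' [l'U El]] : exists l', (forall y, y \in l' -> (y <= U)%MS) /\ l = map (sig d) l'.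
    clear sl; elim: l Gl => [|x l IH] Gl; first by exists [::].
    have [x' [x'U ->]] := Gl x (mem_head _ _).
    have [l' [l'U ->]] : exists l', (forall y, y \in l' -> (y <= U)%MS) /\ l = map (sig d) l'.
      by apply: IH => y yl; apply: Gl; rewrite inE yl orbT.
    exists (x' :: l'); split => // y; rewrite inE => /orP[/eqP->|]; [exact: x'U|exact: l'U].
  subst l; rewrite -sig_foldr nk ?map_mx0 //; by rewrite size_map in sl.
have := nilp_span (@mulgDl _ _ _) (@mulgDr _ _ _) (@mulgZl _ _ _) (@mulgZr _ _ _) nG.
move=> nS z l sl zS lS; apply: nS => //.
  move: zS => /submxP [u ->]; rewrite mulmx_sum_row.
  by exists m, (fun i => u 0 i), (fun i => row i (sig d U)); split => // i; exists (row i U); rewrite map_row row_sub.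
move=> x /lS /submxP [u ->]; rewrite mulmx_sum_row.
by exists m, (fun i => u 0 i), (fun i => row i (sig d U)); split => // i; exists (row i U); rewrite map_row row_sub.
Qed.

Lemma adds_ideal U V : idealK U -> idealK V -> idealK (U + V)%MS.
Proof.
move=> HU HV x y /sub_addsmxP [u ->].
have := HU _ y (submxMl u.1 U); have := HV _ y (submxMl u.2 V).
case=> [h1 h2] [h3 h4].
by rewrite mulgDr mulgDl; split; apply: addmx_sub_adds.
Qed.

Lemma adds_nilp U V : idealK V -> nilpK U -> nilpK V -> nilpK (U + V)%MS.
Proof.
move=> HV [k1 n1] [k2 n2]; exists (k1 + k2 * k1.+1)%N.
have := nilp_sum mulKA (@mulgDl _ _ _) (@mulgDr _ _ _) (S := fun _ => True)
  (I := fun x => (x <= U)%MS) (J := fun x => (x <= V)%MS) (fun _ _ _ _ => I)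
  (fun _ _ => I) (fun _ _ => I) (fun x y xV yV => addmx_sub xV yV)
  (fun s x _ xV => (HV x s xV).1) (fun s x _ xV => (HV x s xV).2) n1 n2.
have Hs x : (x <= U + V)%MS -> sumset (fun x => (x <= U)%MS) (fun x => (x <= V)%MS) x.
  by move=> /sub_addsmxP [u ->]; exists (u.1 *m U), (u.2 *m V); split; rewrite ?submxMl.
by move=> nS z l sl zS lS; apply: nS => //; [exact: Hs | move=> x /lS; exact: Hs].
Qed.

Hypothesis HsemiF : forall N, idealK N -> nilpK N ->
  forall c0 : 'rV[F]_m, (map_mx f c0 <= N)%MS -> c0 = 0.

Lemma semiprime U : idealK U -> nilpK U -> U = 0.
Proof.
suff H : forall k (U : 'M[K]_m), (m - \rank U <= k)%N -> idealK U -> nilpK U -> U = 0.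
  by apply: (H m); rewrite leq_subr.
elim=> [|k IH] {}U sk iU nU.
all: pose V := (U + sig 1 U)%MS.
all: have iV : idealK V by apply: adds_ideal => //; exact: sig_ideal.
all: have nV : nilpK V by apply: adds_nilp => //; [exact: sig_ideal | exact: sig_nilp].
all: have UV : (U <= V)%MS by exact: addsmxSl.
all: have [ltUV | leVU] := ltnP (\rank U) (\rank V).
- by move: sk ltUV (rank_leq_col V); lia.
- have VU : (V <= U)%MS by rewrite -(mxrank_leqif_sup UV).2 eqn_leq leVU mxrankS.
  have sU : (sig 1 U <= U)%MS by apply: submx_trans VU; exact: addsmxSr.
  have [//|U0] := eqVneq U 0.
  have [c0 c0n c0U] := descent (ltn0Sn 0) sU U0.
  by move: c0n; rewrite (HsemiF iU nU c0U) eqxx.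
- have V0 : V = 0 by apply: IH => //; move: sk (rank_leq_col V); lia.
  by apply/eqP; rewrite -submx0 -V0.
- have VU : (V <= U)%MS by rewrite -(mxrank_leqif_sup UV).2 eqn_leq leVU mxrankS.
  have sU : (sig 1 U <= U)%MS by apply: submx_trans VU; exact: addsmxSr.
  have [//|U0] := eqVneq U 0.
  have [c0 c0n c0U] := descent (ltn0Sn 0) sU U0.
  by move: c0n; rewrite (HsemiF iU nU c0U) eqxx.
Qed.


Definition minI (M : 'M[K]_m) := [/\ idealK M, M != 0 &
  forall L, idealK L -> L != 0 -> (L <= M)%MS -> (M <= L)%MS].

Lemma exists_min J : idealK J -> J != 0 -> exists M, minI M /\ (M <= J)%MS.
Proof.
suff H : forall k (J : 'M[K]_m), (\rank J <= k)%N -> idealK J -> J != 0 ->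
    exists M, minI M /\ (M <= J)%MS by apply: H.
elim=> [|k IH] {}J rk iJ J0.
  by move: J0; rewrite -mxrank_eq0 -leqn0 rk.
case: (classic (exists L, [/\ idealK L, L != 0, (L <= J)%MS & ~~ (J <= L)%MS])).
  move=> [L [iL L0 LJ nJL]].
  have ltL : (\rank L < \rank J)%N.
    rewrite ltnNge; apply: contra nJL => h.
    by rewrite -(mxrank_leqif_sup LJ).2 eqn_leq h mxrankS.
  have [M [mM ML]] := IH L ltac:(move: ltL rk; lia) iL L0.
  by exists M; split => //; apply: submx_trans ML LJ.
move=> H; exists J; split => //; split => // L iL L0 LJ.
by apply/negP => nJL; apply: H; exists L; split => //; apply/negP.
Qed.

Lemma cap_ideal U V : idealK U -> idealK V -> idealK (U :&: V)%MS.
Proof.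
move=> iU iV x y xUV.
have xU : (x <= U)%MS by apply: submx_trans xUV (capmxSl _ _).
have xV : (x <= V)%MS by apply: submx_trans xUV (capmxSr _ _).
have [h1 h2] := iU x y xU; have [h3 h4] := iV x y xV.
by split; rewrite sub_capmx ?h1 ?h2 ?h3 ?h4.
Qed.

Lemma min_cap M1 M2 : minI M1 -> minI M2 -> ~~ (M1 == M2)%MS -> (M1 :&: M2)%MS = 0.
Proof.
move=> [i1 n1 m1] [i2 n2 m2] ne; apply/eqP; apply: contraNT ne => C0.
have iC := cap_ideal i1 i2.
have h1 := m1 _ iC C0 (capmxSl _ _); have h2 := m2 _ iC C0 (capmxSr _ _).
apply/andP; split.
  by apply: submx_trans h1 (capmxSr _ _).
by apply: submx_trans h2 (capmxSl _ _).
Qed.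

Lemma min_disj M1 M2 (x : 'rV[K]_m) : minI M1 -> minI M2 -> ~~ (M1 == M2)%MS ->
  (x <= M1)%MS -> (x <= M2)%MS -> x = 0.
Proof.
move=> h1 h2 ne x1 x2; have : (x <= M1 :&: M2)%MS by rewrite sub_capmx x1 x2.
by rewrite (min_cap h1 h2 ne) submx0 => /eqP.
Qed.

Lemma min_not_sub t (N : 'I_t -> 'M[K]_m) M : minI M -> (forall i, minI (N i)) ->
  (forall i, ~~ (M == N i)%MS) -> ~~ (M <= \sum_(i < t) N i)%MS.
Proof.
move=> hM hN ne; apply/negP => sub.
have iM := hM; case: iM => [iM M0 _].
have : M = 0.
  apply: semiprime => //; exists 1%N => z [|w [|? ?]] // _ zM wl /=.
  have wM : (w <= M)%MS by apply: wl; rewrite inE eqxx.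
  have := submx_trans zM sub; case/sub_sumsmxP => u ->.
  rewrite (gmul_sumr (@mulgDr _ _ _) (@mulgZr _ _ _)) big1 // => i _.
  apply: (min_disj hM (hN i) (ne i)).
    exact: (iM w _ wM).2.
  have [_ _ _] := hN i; case: (hN i) => iN _ _.
  exact: (iN _ w (submxMl _ _)).1.
by move/eqP; rewrite (negbTE M0).
Qed.


Variable P : 'rV[K]_m -> Prop.
Hypotheses (PD : forall x y, P x -> P y -> P (x + y))
  (PZ : forall a x, P x -> P (a *: x))
  (Pid : forall x y, P x -> P (mulK y x) /\ P (mulK x y))
  (HP : forall c0, P (map_mx f c0) -> c0 = 0).
Hypothesis P0 : P 0.

Lemma exists_PM : exists U : 'M[K]_m, forall x, (x <= U)%MS <-> P x.
Proof.
suff H : forall k (U : 'M[K]_m), (m - \rank U <= k)%N -> (forall x, (x <= U)%MS -> P x) ->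
    exists U' : 'M[K]_m, forall x, (x <= U')%MS <-> P x.
  by apply: (H m 0); [rewrite leq_subr | move=> x; rewrite submx0 => /eqP ->].
elim=> [|k IH] U sk HU.
  exists U => x; split; first exact: HU.
  move=> _; apply: submx_full; rewrite /row_full eqn_leq rank_leq_col /=; move: sk; lia.
case: (classic (exists c, P c /\ ~~ (c <= U)%MS)) => [[c [Pc cU]]|H]; last first.
  exists U => x; split; first exact: HU.
  by move=> Px; apply/negPn/negP => nx; apply: H; exists x.
apply: (IH (U + c)%MS).
  have lt : (U < U + c)%MS.
    rewrite ltmxE addsmxSl /=; apply: contra cU => h; exact: submx_trans (addsmxSr U c) h.
  move: lt; rewrite ltmxErank => /andP[_ lt]; move: sk lt (rank_leq_col (U + c)%MS); lia.
move=> x /sub_addsmxP [u ->]; apply: PD; first by apply: HU; exact: submxMl.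
by rewrite [u.2]mx11_scalar mul_scalar_mx; apply: PZ.
Qed.

Theorem core_main c : P c -> c = 0.
Proof.
move=> Pc; apply/eqP; apply: contraT => c0.
have [PM HPM] := exists_PM.
have iPM : idealK PM.
  by move=> x y /HPM /(Pid y) [h1 h2]; split; apply/HPM.
have PM0 : PM != 0.
  apply: contraNneq c0 => PM0'; have := (HPM c).2 Pc; by rewrite PM0' submx0.
have [M0 [mM0 M0PM]] := exists_min iPM PM0.
pose nextf (J : 'M[K]_m) := epsilon (inhabits (0 : 'M[K]_m)) (fun M => minI M /\ (M <= sig 1 J)%MS).
have next_spec J : minI J -> minI (nextf J) /\ (nextf J <= sig 1 J)%MS.
  move=> [iJ J0 _]; apply: (epsilon_spec (inhabits (0 : 'M[K]_m)) (fun M => minI M /\ (M <= sig 1 J)%MS)).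
  apply: exists_min; first exact: sig_ideal.
  by rewrite -mxrank_eq0 mxrank_map mxrank_eq0.
pose N i := iter i nextf M0.
have mN i : minI (N i) by elim: i => // i IH; exact: (next_spec _ IH).1.
have NS i : (N i.+1 <= sig 1 (N i))%MS := (next_spec _ (mN i)).2.
have [a [b [ab bm Eab]]] : exists a b, [/\ (a < b)%N, (b <= m)%N & (N a == N b)%MS].
  apply: NNPP => H.
  have rk t : (t <= m)%N -> (t < \rank (\sum_(i < t.+1) N i)%MS)%N.
    elim: t => [_|t IH tm].
      by rewrite big_ord1 lt0n mxrank_eq0; case: (mN 0).
    rewrite big_ord_recr /=.
    have nsub : ~~ (N t.+1 <= \sum_(i < t.+1) N i)%MS.
      apply: (min_not_sub (N := fun i : 'I_t.+1 => N i)) => // i.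
      apply/negP => /andP [E1 E2]; apply: H; exists i, t.+1; split => //.
      by apply/andP.
    have lt : (\sum_(i < t.+1) N i < \sum_(i < t.+1) N i + N t.+1)%MS.
      rewrite ltmxE addsmxSl /=; apply: contra nsub => h; exact: submx_trans (addsmxSr _ _) h.
    move: lt; rewrite ltmxErank => /andP[_ lt].
    exact: (leq_ltn_trans (IH (ltnW tm)) lt).
  by have := rk m (leqnn m); rewrite ltnNge rank_leq_col.
have back a' b' : (a' < b')%N -> (N a' == N b')%MS -> (N 0 == N (b' - a')%N)%MS.
  elim: a' b' => [|a' IH] b' ab' E; first by rewrite subn0.
  case: b' ab' E => // b' ab' E.
  rewrite subSS; apply: IH => //.
  apply: contraT => ne.
  have C0 := min_cap (mN a') (mN b') ne.
  have : (N a'.+1 <= sig 1 (N a') :&: sig 1 (N b'))%MS.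
    rewrite sub_capmx NS /=; apply: submx_trans (NS b'); by case/andP: E.
  rewrite -(map_capmx (qpow f 1) (N a') (N b')) C0 map_mx0 submx0.
  by case: (mN a'.+1) => _ /negbTE ->.
have chain i : (N i <= sig i (N 0))%MS.
  elim: i => [|i IH].
    suff -> : sig 0 (N 0) = N 0 by [].
    by apply/matrixP => r s; rewrite mxE /qpow expn0 expr1.
  apply: submx_trans (NS i) _.
  have -> : sig i.+1 (N 0) = sig 1 (sig i (N 0)).
    by apply/matrixP => r s; rewrite !mxE qpow_comp add1n.
  by rewrite map_submx.
have d0 : (0 < b - a)%N by rewrite subn_gt0.
have E0 := back a b ab Eab.
have sub1 : (N 0 <= sig (b - a)%N (N 0))%MS.
  by apply: submx_trans (chain (b - a)%N); case/andP: E0.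
have sub2 : (sig (b - a)%N (N 0) <= N 0)%MS.
  by rewrite -(mxrank_leqif_sup sub1).2 mxrank_map eqxx.
have [c1 c1n c1N] := descent d0 sub2 (let: And3 _ h _ := mN 0 in h).
have : P (map_mx f c1) by apply/HPM; apply: submx_trans c1N M0PM.
by move/HP => c10; rewrite c10 eqxx in c1n.
Qed.

End Core.


Definition pbool (P : Prop) : bool := if excluded_middle_informative P then true else false.
Lemma pboolP (P : Prop) : reflect P (pbool P).
Proof. by rewrite /pbool; case: excluded_middle_informative => h; constructor. Qed.

Section Glue1.
Variables (F : finFieldType) (K : fieldType) (f : {rmorphism F -> K}) (n : nat).

Lemma subspace_dim (B S : mset K n) d : F_subspace f S -> (forall A, S A -> B A) ->
  F_dim_is f B d -> exists d', F_dim_is f S d'.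
Proof.
move=> [S0 SD SZ] SB [s [_ sfree sspan]].
pose k := size s.
pose sF (v : 'rV[F]_k) := \sum_(j < k) f (v 0 j) *: s`_j.
have sF_add v w : sF (v + w) = sF v + sF w.
  by rewrite /sF -big_split; apply: eq_bigr => j _; rewrite mxE rmorphD scalerDl.
have sF_scale a v : sF (a *: v) = f a *: sF v.
  by rewrite /sF scaler_sumr; apply: eq_bigr => j _; rewrite mxE rmorphM scalerA.
have sF0 : sF 0 = 0 by rewrite /sF big1 // => j _; rewrite mxE rmorph0 scale0r.
have sF_sum r (a : 'I_r -> F) (v : 'I_r -> 'rV[F]_k) :
    sF (\sum_i a i *: v i) = \sum_i f (a i) *: sF (v i).
  elim/big_rec2: _ => [|i x y _ <-]; first exact: sF0.
  by rewrite sF_add sF_scale.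
have sF_inj v : sF v = 0 -> v = 0.
  by move=> h; apply/rowP => j; rewrite mxE; exact: (sfree (fun j => v 0 j) h j).
pose pb v := pbool (S (sF v)).
pose U := (\sum_(v | pb v) <<v>>)%MS.
have Q : forall w, (w <= U)%MS -> S (sF w).
  rewrite /U; elim/big_ind: _.
  - by move=> w; rewrite submx0 => /eqP ->; rewrite sF0.
  - move=> X Y HX HY w /sub_addsmxP [u ->]; rewrite sF_add; apply: SD.
      by apply: HX; exact: submxMl.
    by apply: HY; exact: submxMl.
  - move=> v /pboolP Sv w; rewrite genmxE => /sub_rVP [a ->].
    by rewrite sF_scale; apply: SZ.
pose RB := row_base U; pose r := \rank U.
pose bs := map (fun i : 'I_r => sF (row i RB)) (enum 'I_r).
have sbs : size bs = r by rewrite size_map size_enum_ord.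
have nbs (i : 'I_r) : bs`_i = sF (row i RB).
  rewrite (nth_map i) ?size_enum_ord //; congr (sF (row _ RB)).
  by apply: val_inj; rewrite /= nth_enum_ord.
have comb (c : 'I_r -> F) : \sum_(i < r) f (c i) *: bs`_i = sF ((\row_i c i) *m RB).
  rewrite mulmx_sum_row sF_sum; apply: eq_bigr => i _; by rewrite nbs mxE.
exists r, bs; split; first exact: sbs.
  rewrite /F_free sbs => c; rewrite comb => /sF_inj /eqP.
  rewrite mulmx_free_eq0 ?row_base_free // => /eqP c0 i.
  by move/rowP/(_ i): c0; rewrite !mxE.
move=> A; rewrite /F_span sbs; split.
  move=> SA; have [c Ac] := (sspan A).1 (SB A SA).
  have Ev : sF (\row_j c j) = A by rewrite Ac /sF; apply: eq_bigr => j _; rewrite mxE.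
  have : (\row_j c j <= U)%MS.
    by apply: (sumsmx_sup (\row_j c j)); [apply/pboolP; rewrite Ev | rewrite genmxE].
  rewrite -(eq_row_base U) => /submxP [u Eu].
  exists (fun i => u 0 i); rewrite comb.
  have -> : \row_i u 0 i = u by apply/rowP => i; rewrite mxE.
  by rewrite -Eu Ev.
move=> [c ->]; rewrite comb; apply: Q.
by apply: submx_trans (submxMl _ _) _; rewrite eq_row_base.
Qed.

End Glue1.


Definition catf (t1 t2 : nat) (T : Type) (a1 : 'I_t1 -> T) (a2 : 'I_t2 -> T)
  (i : 'I_(t1 + t2)) : T := match split i with inl j => a1 j | inr j => a2 j end.
Lemma catf_l t1 t2 T a1 a2 (i : 'I_t1) : @catf t1 t2 T a1 a2 (lshift t2 i) = a1 i.
Proof. by rewrite /catf (unsplitK (inl i : 'I_t1 + 'I_t2)). Qed.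
Lemma catf_r t1 t2 T a1 a2 (i : 'I_t2) : @catf t1 t2 T a1 a2 (rshift t1 i) = a2 i.
Proof. by rewrite /catf (unsplitK (inr i : 'I_t1 + 'I_t2)). Qed.

Section KspanLemmas.
Variables (K : fieldType) (n : nat) (S : mset K n).

Lemma Kspan0 : K_span S 0.
Proof. by exists 0%N, (fun _ => 0), (fun _ => 0); split; [case | rewrite big_ord0]. Qed.

Lemma KspanD A C : K_span S A -> K_span S C -> K_span S (A + C).
Proof.
move=> [t1 [a1 [v1 [h1 ->]]]] [t2 [a2 [v2 [h2 ->]]]].
exists (t1 + t2)%N, (catf a1 a2), (catf v1 v2); split.
  by move=> i; rewrite /catf; case: split => j.
by rewrite big_split_ord; congr (_ + _); apply: eq_bigr => i _; rewrite ?catf_l ?catf_r.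
Qed.

Lemma KspanZ c A : K_span S A -> K_span S (c *: A).
Proof.
move=> [t [a [v [h ->]]]]; exists t, (fun i => c * a i), v; split => //.
by rewrite scaler_sumr; apply: eq_bigr => i _; rewrite scalerA.
Qed.

Lemma Kspan_sum t (G : 'I_t -> 'M[K]_n) : (forall i, K_span S (G i)) ->
  K_span S (\sum_(i < t) G i).
Proof.
move=> h; elim/big_ind: _ => //; [exact: Kspan0 | exact: KspanD].
Qed.

Lemma Kspan_mull X A : (forall v, S v -> S (X *m v)) -> K_span S A -> K_span S (X *m A).
Proof.
move=> hX [t [a [v [h ->]]]]; exists t, a, (fun i => X *m v i); split => [i|]; first exact: hX.
by rewrite mulmx_sumr; apply: eq_bigr => i _; rewrite scalemxAr.
Qed.

Lemma Kspan_mulr X A : (forall v, S v -> S (v *m X)) -> K_span S A -> K_span S (A *m X).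
Proof.
move=> hX [t [a [v [h ->]]]]; exists t, a, (fun i => v i *m X); split => [i|]; first exact: hX.
by rewrite mulmx_suml; apply: eq_bigr => i _; rewrite scalemxAl.
Qed.

Lemma Kspan_in A : S A -> K_span S A.
Proof.
by move=> SA; exists 1%N, (fun _ => 1), (fun _ => A); split => //; rewrite big_ord1 scale1r.
Qed.
End KspanLemmas.

Section Nilconv.
Variables (K : fieldType) (n : nat).

Lemma nilset_nilp (S : mset K n) : nilpotent_set S -> exists k, nilp (@mulmx K n n n) S k.
Proof.
move=> [k H]; exists k => z l sl Sz Sl.
pose s := rcons l z.
have ss : size s = k.+1 by rewrite size_rcons sl.
have Ev : [seq nth z s (nat_of_ord i) | i <- enum 'I_k.+1] = s.
  have -> : [seq nth z s (nat_of_ord i) | i <- enum 'I_k.+1] = map (nth z s) (map val (enum 'I_k.+1)).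
    by rewrite -map_comp.
  rewrite val_enum_ord -ss map_nth_iota0 //.
  exact: take_size.
have Sv : forall i : 'I_k.+1, S (nth z s i).
  move=> i; have : nth z s i \in s by rewrite mem_nth // ss.
  by rewrite mem_rcons inE => /orP[/eqP->|/Sl].
have := H (fun i : 'I_k.+1 => nth z s i) Sv; rewrite Ev /s foldr_rcons mulmx1.
by [].
Qed.

Lemma nilp_nilset (S : mset K n) k : nilp (@mulmx K n n n) S k -> nilpotent_set S.
Proof.
move=> H; exists k => v Sv.
have sz : size [seq v i | i <- enum 'I_k.+1] = k.+1 by rewrite size_map size_enum_ord.
have Sm x : x \in [seq v i | i <- enum 'I_k.+1] -> S x by move=> /mapP [i _ ->].
move: sz Sm; case/lastP: [seq v i | i <- enum 'I_k.+1] => // l z.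
rewrite size_rcons => -[sl] Sm; rewrite foldr_rcons mulmx1.
apply: H => //; first by apply: Sm; rewrite mem_rcons inE eqxx.
by move=> x xl; apply: Sm; rewrite mem_rcons inE xl orbT.
Qed.
End Nilconv.


Section Main.
Variables (F : finFieldType) (K : fieldType) (f : {rmorphism F -> K}) (n : nat)
  (B B' R : mset K n).
Hypotheses (hB : F_subalgebra f B) (hJ : jacobson_radical f B R) (hB' : F_subalgebra f B')
  (hdec : forall A, B A <-> exists X Y, [/\ B' X, R Y & A = X + Y])
  (hcap : forall A, B' A -> R A -> A = 0).

Lemma B'B A : B' A -> B A.
Proof.
move=> h; apply/hdec; exists A, 0; split => //; last by rewrite addr0.
by case: hJ => [[[R0 _ _] _ _ _] _ _].
Qed.

Lemma Bsemi (I : mset K n) : F_subspace f I -> (forall A, I A -> B' A) ->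
  (forall X A, B' X -> I A -> I (X *m A) /\ I (A *m X)) ->
  (exists k, nilp (@mulmx K n n n) I k) -> forall A, I A -> A = 0.
Proof.
move=> [I0 ID IZ] IB' Iid [k1 nI] A IA.
case: hJ => [[[R0 RD RZ] RB Rl Rr] nR maxR].
have [k2 nR'] := nilset_nilp nR.
pose J := sumset I R.
have tJ : two_sided_ideal f B J.
  split.
  - split.
    + by exists 0, 0; rewrite addr0.
    + move=> X Y [a [r [Ia Rr1 ->]]] [a' [r' [Ia' Rr' ->]]].
      exists (a + a'), (r + r'); split; [exact: ID | exact: RD | by rewrite addrACA].
    + move=> c X [a [r [Ia Rr1 ->]]]; exists (f c *: a), (f c *: r).
      by split; [exact: IZ | exact: RZ | rewrite scalerDr].
  - move=> X [a [r [Ia Rr1 ->]]]; apply/hdec; exists a, r; split => //; exact: IB'.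
  - move=> X Y BX [a [r [Ia Rr1 ->]]]; case/hdec: BX => [x' [y [B'x Ry ->]]].
    exists (x' *m a), (x' *m r + y *m a + y *m r); split.
    + exact: (Iid _ _ B'x Ia).1.
    + apply: (RD); [apply: (RD)|].
      * by apply: (Rl) => //; exact: B'B.
      * by apply: (Rr) => //; apply: B'B; exact: IB'.
      * by apply: (Rl) => //; exact: RB.
    + by rewrite mulmxDl !mulmxDr !addrA.
  - move=> X Y BX [a [r [Ia Rr1 ->]]]; case/hdec: BX => [x' [y [B'x Ry ->]]].
    exists (a *m x'), (a *m y + r *m x' + r *m y); split.
    + exact: (Iid _ _ B'x Ia).2.
    + apply: (RD); [apply: (RD)|].
      * by apply: (Rl) => //; apply: B'B; exact: IB'.
      * by apply: (Rr) => //; exact: B'B.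
      * by apply: (Rr) => //; exact: RB.
    + by rewrite mulmxDr !mulmxDl -!addrA; congr (_ + _); rewrite addrCA.
have nJ : nilpotent_set J.
  case: hB => _ Bmul.
  apply: (nilp_nilset (k := (k1 + k2 * k1.+1)%N)).
  apply: (nilp_sum (@mulmxA K n n n n) (@mulmxDl K n n n) (@mulmxDr K n n n)
    (S := B) (I := I) (J := R) Bmul _ RB RD _ _ nI nR').
  - by move=> x /IB'; exact: B'B.
  - by move=> s x Bs Rx; exact: Rl.
  - by move=> s x Bs Rx; exact: Rr.
have RA : R A by apply: (maxR J tJ nJ); exists A, 0; split => //; rewrite addr0.
exact: hcap (IB' A IA) RA.
Qed.

Lemma BKR A : B' A -> K_span R A -> A = 0.
Proof.
case: hJ => [[[R0 RD RZ] RB Rl Rr] nR maxR].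
case: hB' => [[B'0 B'D B'Z] B'mul].
move=> h1 h2; apply: (Bsemi (I := fun A => B' A /\ K_span R A)) (conj h1 h2).
- split.
  + by split => //; exact: Kspan0.
  + by move=> X Y [h3 h4] [h5 h6]; split; [exact: B'D | exact: KspanD].
  + by move=> c X [h3 h4]; split; [exact: B'Z | exact: KspanZ].
- by move=> X [].
- move=> X Y B'X [h3 h4]; split; split.
  + exact: B'mul.
  + by apply: Kspan_mull h4 => v Rv; apply: (Rl) => //; exact: B'B.
  + exact: B'mul.
  + by apply: Kspan_mulr h4 => v Rv; apply: (Rr) => //; exact: B'B.
- have [k nR'] := nilset_nilp nR.
  exists k; move: (nilp_span (@mulmxDl K n n n) (@mulmxDr K n n n)
     (fun a x y => esym (scalemxAl a x y)) (fun a x y => esym (scalemxAr a x y)) nR').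
  by move=> H z l sl [_ Sz] Sl; apply: H => // x /Sl [].
Qed.

End Main.


Section Coords.
Variables (F : finFieldType) (K : fieldType) (f : {rmorphism F -> K}) (n : nat)
  (B' : mset K n) (bs : seq 'M[K]_n).
Hypotheses (bfree : F_free f bs) (bspan : forall A, B' A <-> F_span f bs A)
  (hB' : F_subalgebra f B').
Local Notation m := (size bs).

Definition phiK (c : 'rV[K]_m) := \sum_(i < m) c 0 i *: bs`_i.
Definition phiF (c : 'rV[F]_m) := \sum_(i < m) f (c 0 i) *: bs`_i.

Lemma phiK_f c : phiK (map_mx f c) = phiF c.
Proof. by apply: eq_bigr => i _; rewrite mxE. Qed.
Lemma phiK_add x y : phiK (x + y) = phiK x + phiK y.
Proof. by rewrite /phiK -big_split; apply: eq_bigr => i _; rewrite mxE scalerDl. Qed.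
Lemma phiK_scale a x : phiK (a *: x) = a *: phiK x.
Proof. by rewrite /phiK scaler_sumr; apply: eq_bigr => i _; rewrite mxE scalerA. Qed.
Lemma phiK0 : phiK 0 = 0.
Proof. by rewrite /phiK big1 // => i _; rewrite mxE scale0r. Qed.
Lemma phiK_sum I (r : seq I) (P : pred I) (G : I -> 'rV[K]_m) :
  phiK (\sum_(i <- r | P i) G i) = \sum_(i <- r | P i) phiK (G i).
Proof. by elim/big_rec2: _ => [|i a b _ <-]; rewrite ?phiK0 ?phiK_add. Qed.

Lemma phiF_add x y : phiF (x + y) = phiF x + phiF y.
Proof. by rewrite -!phiK_f map_mxD phiK_add. Qed.
Lemma phiF_scale a x : phiF (a *: x) = f a *: phiF x.
Proof. by rewrite -!phiK_f map_mxZ phiK_scale. Qed.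
Lemma phiF_inj c : phiF c = 0 -> c = 0.
Proof. move=> h; apply/rowP => i; rewrite mxE; exact: (@bfree (fun i => c 0 i) h i). Qed.
Lemma phiF_B' c : B' (phiF c).
Proof. by apply/bspan; exists (fun i => c 0 i). Qed.
Lemma B'_phiF A : B' A -> exists c, A = phiF c.
Proof.
move=> /bspan [c ->]; exists (\row_i c i); apply: eq_bigr => i _; by rewrite mxE.
Qed.
Lemma phiK_delta (i : 'I_m) : phiK (delta_mx 0 i) = bs`_i.
Proof.
rewrite /phiK (bigD1 i) //= big1 ?addr0; first by rewrite mxE !eqxx scale1r.
by move=> j ji; rewrite mxE (negbTE ji) andbF scale0r.
Qed.
Lemma bs_B' (i : 'I_m) : B' bs`_i.
Proof. by rewrite -phiK_delta -(map_delta_mx f) phiK_f; exact: phiF_B'. Qed.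

Lemma gam_ex (i j : 'I_m) : exists c : 'rV[F]_m, bs`_i *m bs`_j == phiF c.
Proof.
case: hB' => _ hm; have [c ->] := B'_phiF (hm _ _ (bs_B' i) (bs_B' j)).
by exists c.
Qed.
Definition gam (i j : 'I_m) := xchoose (gam_ex i j).
Lemma gam_spec (i j : 'I_m) : bs`_i *m bs`_j = phiF (gam i j).
Proof. exact/eqP/(xchooseP (gam_ex i j)). Qed.

Local Notation gamK := (fun i j => map_mx f (gam i j)).

Lemma phiK_mul x y : phiK (mulg gamK x y) = phiK x *m phiK y.
Proof.
rewrite /mulg phiK_sum [phiK x]/phiK mulmx_suml; apply: eq_bigr => i _.
rewrite phiK_sum [phiK y]/phiK -scalemxAl mulmx_sumr scaler_sumr; apply: eq_bigr => j _.
by rewrite phiK_scale phiK_f -gam_spec -scalemxAr scalerA.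
Qed.

Lemma phiF_mul x y : phiF (mulg gam x y) = phiF x *m phiF y.
Proof. by rewrite -!phiK_f map_mulg phiK_mul. Qed.

Lemma gam_assoc : associative (mulg gam).
Proof.
move=> x y z; apply/eqP; rewrite -subr_eq0; apply/eqP/phiF_inj.
by rewrite -scaleN1r phiF_add phiF_scale rmorphN1 scaleN1r !phiF_mul mulmxA subrr.
Qed.

End Coords.


Section Final.
Variables (F : finFieldType) (K : fieldType) (f : {rmorphism F -> K}) (n : nat)
  (B B' R : mset K n) (bs : seq 'M[K]_n).
Hypotheses (hconst : full_constant_field f)
  (hB : F_subalgebra f B) (hJ : jacobson_radical f B R) (hB' : F_subalgebra f B')
  (hdec : forall A, B A <-> exists X Y, [/\ B' X, R Y & A = X + Y])
  (hcap : forall A, B' A -> R A -> A = 0)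
  (bfree : F_free f bs) (bspan : forall A, B' A <-> F_span f bs A).
Local Notation m := (size bs).
Local Notation gam := (gam bspan hB').
Local Notation gamK := (fun i j => map_mx f (gam i j)).
Local Notation pK := (@phiK K n bs).
Local Notation pF := (@phiF F K f n bs).

Lemma key (c : 'rV[K]_m) : K_span R (pK c) -> c = 0.
Proof.
case: hJ => [[[R0 RD RZ] RB Rl Rr] nR maxR].
have BB' := B'B hJ hdec.
apply: (@core_main F K f hconst m gam (gam_assoc bfree bspan hB') _ (fun c => K_span R (pK c))) .
- move=> N iN [k nN] c0 c0N; apply: (phiF_inj bfree).
  apply: (Bsemi hB hJ hdec hcap (I := fun A => exists c, (map_mx f c <= N)%MS /\ A = pF c)).
  + split.
    * by exists 0; rewrite map_mx0 sub0mx -phiK_f map_mx0 phiK0.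
    * move=> X Y [c1 [h1 ->]] [c2 [h2 ->]]; exists (c1 + c2).
      by rewrite map_mxD addmx_sub // phiF_add.
    * move=> a X [c1 [h1 ->]]; exists (a *: c1).
      by rewrite map_mxZ scalemx_sub // phiF_scale.
  + by move=> X [c1 [_ ->]]; exact: (phiF_B' bspan).
  + move=> X A B'X [c1 [h1 ->]].
    have [d ->] := B'_phiF bspan B'X.
    have := iN _ (map_mx f d) h1; case=> [h2 h3].
    split.
    * exists (mulg gam d c1); split; last by rewrite phiF_mul.
      by rewrite map_mulg.
    * exists (mulg gam c1 d); split; last by rewrite phiF_mul.
      by rewrite map_mulg.
  + exists k => z l sl [cz [hz ->]] Sl.
    have [l' [l'N El]] : exists l' : seq 'rV[K]_m, (forall y, y \in l' -> (y <= N)%MS) /\ l = map pK l'.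
      clear sl; elim: l Sl => [|x l IH] Sl; first by exists [::].
      have [cx [hx ->]] := Sl x (mem_head _ _).
      have [l' [l'N ->]] : exists l' : seq 'rV[K]_m, (forall y, y \in l' -> (y <= N)%MS) /\ l = map pK l'.
        by apply: IH => y yl; apply: Sl; rewrite inE yl orbT.
      exists (map_mx f cx :: l'); split; last by rewrite /= phiK_f.
      by move=> y; rewrite inE => /orP[/eqP->|]; [exact: hx|exact: l'N].
    subst l; rewrite -phiK_f.
    have Efold : forall (l0 : seq 'rV[K]_m) z0,
        foldr (@mulmx K n n n) (pK z0) (map pK l0) = pK (foldr (mulg gamK) z0 l0).
      by move=> l0 z0; elim: l0 => //= x l0 ->; rewrite phiK_mul.
    rewrite Efold.
    by rewrite nN ?phiK0 // -(size_map pK).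
  + by exists c0.
- by move=> x y; rewrite phiK_add; exact: KspanD.
- by move=> a x; rewrite phiK_scale; exact: KspanZ.
- move=> x y Px; rewrite !phiK_mul; split.
    rewrite [pK y]/phiK mulmx_suml; apply: Kspan_sum => i; rewrite -scalemxAl.
    apply: KspanZ; apply: Kspan_mull Px => v Rv; apply: (Rl) => //; apply: BB'; exact: bs_B'.
  rewrite [pK y]/phiK mulmx_sumr; apply: Kspan_sum => i; rewrite -scalemxAr.
  apply: KspanZ; apply: Kspan_mulr Px => v Rv; apply: (Rr) => //; apply: BB'; exact: bs_B'.
- move=> c0; rewrite phiK_f => h; apply: (phiF_inj bfree).
  exact: (BKR hB hJ hB' hdec hcap (phiF_B' bspan c0) h).
- by rewrite phiK0; exact: Kspan0.
Qed.

End Final.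

Unset Implicit Arguments.


Theorem proposition3p2 (F : finFieldType) (K : fieldType) (f : {rmorphism F -> K})
  (hK : function_field_one_var f) (hconst : full_constant_field f)
  (n : nat) (B B' R : mset K n) :
  F_subalgebra f B -> (exists d, F_dim_is f B d) ->
  jacobson_radical f B R ->
  F_subalgebra f B' ->
  (forall A, B A <-> exists X Y, [/\ B' X, R Y & A = X + Y]) ->
  (forall A, B' A -> R A -> A = 0) ->
  (exists d, F_dim_is f B' d /\ K_dim_is (K_span B') d) /\
  (forall A, K_span B' A -> K_span R A -> A = 0).
Proof.
move=> hB [d hd] hJ hB' hdec hcap.
have BB' := B'B hJ hdec.
have [d' [bs [sz bfree bspan]]] := subspace_dim (let: conj h _ := hB' in h) BB' hd.
have key' := key hconst hB hJ hB' hdec hcap bfree bspan.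
have toK A : K_span B' A -> exists c, A = @phiK K n bs c.
  move=> [t [a [v [hv ->]]]].
  have ex i : exists c, v i == @phiF F K f n bs c.
    by have [c ->] := B'_phiF bspan (hv i); exists c.
  exists (\sum_(i < t) a i *: map_mx f (xchoose (ex i))).
  rewrite phiK_sum; apply: eq_bigr => i _.
  by rewrite phiK_scale phiK_f -(eqP (xchooseP (ex i))).
split.
  exists (size bs); split; first by exists bs; split.
  exists bs; split => //.
    move=> c hc.
    have := key' (\row_i c i).
    rewrite (_ : @phiK K n bs (\row_i c i) = 0); last by rewrite -hc; apply: eq_bigr => i _; rewrite mxE.
    move=> /(_ (Kspan0 _)) /rowP h i; by have := h i; rewrite !mxE.
  move=> A; split.
    by move=> /toK [c ->]; exists (fun i => c 0 i).
  move=> [c ->]; apply: Kspan_sum => i; apply: KspanZ; apply: Kspan_in.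
  exact: bs_B'.
move=> A /toK [c ->] h.
by rewrite (key' _ h) phiK0.
Qed.
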